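(* For subdistributions $\mu,\nu$ over nondeterministic expressions, the following are equivalent: (a) $\mu\xRightarrow{\tau}\nu$; (b) there is $\rho$ with $\mu\xrightarrow{\tau}\rho$ (combined transition) and $\rho\Rightarrow\nu$; (c) there is a derivation $(\nu_i^{\to},\nu_i^{\times})_{i\in\mathbb N}$ with $\mu=\nu_0^{\to}+\nu_0^{\times}$, $\nu=\sum_{i\in\mathbb N}\nu_i^{\times}$ and $\nu_0^{\times}=\emptyset$.
   Context: Fix a set $\mathsf{Act}$ of actions containing $\tau$. Nondeterministic expressions: $E ::= 0 \mid X \mid \alpha.P \mid \mathrm{rec}\,X.E \mid E + E$; probabilistic expressions: $P ::= \partial(E) \mid P \oplus_p P$ ($0<p<1$). Subdistributions $\mu$ over $S$: $\mu:S\to\mathbb R_{\ge0}$ with $|\mu|=\sum\mu(s)\le1$; $\delta_s$ Dirac, $\emptyset$ empty; operations pointwise. Semantics: least relations with $\partial(E)\mapsto\delta_E$; $P\oplus_pQ\mapsto p\mu+(1-p)\nu$ if $P\mapsto\mu,Q\mapsto\nu$; $\alpha.P\xrightarrow{\alpha}\mu$ if $P\mapsto\mu$; $\mathrm{rec}\,X.E\xrightarrow{\alpha}\mu$ if $E[\mathrm{rec}\,X.E/X]\xrightarrow{\alpha}\mu$; $E+F\xrightarrow{\alpha}\mu$ and $F+E\xrightarrow{\alpha}\mu$ if $E\xrightarrow{\alpha}\mu$. Combined transitions on subdistributions: least relation with $\delta_E\xrightarrow{\alpha}\mu$ if $E\xrightarrow{\alpha}\mu$, closed under $\sum p_i\nu_i\xrightarrow{\alpha}\sum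 p_i\mu_i$ ($\nu_i\xrightarrow{\alpha}\mu_i$, $p_i\ge0$, $\sum p_i\le1$). A derivation is a sequence $(\mu_i^{\to},\mu_i^{\times})_{i\in\mathbb N}$ of subdistributions with $\mu_i^{\to}\xrightarrow{\tau}\mu^{\to}_{i+1}+\mu^{\times}_{i+1}$ for all $i$; $\mu\Rightarrow\nu$ iff some derivation has $\mu=\mu_0^{\to}+\mu_0^{\times}$ and $\nu=\sum_i\mu_i^\times$. $\mu\xRightarrow{\alpha}\nu$ iff $\mu\Rightarrow\rho\xrightarrow{\alpha}\eta\Rightarrow\nu$ for some $\rho,\eta$. *)

(* Defs.v *)
From Stdlib Require Import Reals List ClassicalEpsilon.
From Coquelicot Require Import Coquelicot.
Open Scope R_scope.

Set Implicit Arguments.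

Section Syntax.
Variable Act : Type.

Inductive nexp : Type :=
| NNil  : nexp
| NVar  : nat -> nexp
| NPre  : Act -> pexp -> nexp
| NRec  : nat -> nexp -> nexp
| NSum  : nexp -> nexp -> nexp
with pexp : Type :=
| PDist : nexp -> pexp
| PChoice : forall p : R, 0 < p < 1 -> pexp -> pexp -> pexp.

Fixpoint nsubst (E : nexp) (X : nat) (F : nexp) : nexp :=
  match E with
  | NNil => NNil
  | NVar Y => if Nat.eqb X Y then F else NVar Y
  | NPre a P => NPre a (psubst P X F)
  | NRec Y E' => if Nat.eqb X Y then NRec Y E' else NRec Y (nsubst E' X F)
  | NSum E1 E2 => NSum (nsubst E1 X F) (nsubst E2 X F)
  end
with psubst (P : pexp) (X : nat) (F : nexp) : pexp :=
  match P with
  | PDist E => PDist (nsubst E X F)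
  | PChoice p hp P1 P2 => PChoice hp (psubst P1 X F) (psubst P2 X F)
  end.

Definition sdist := nexp -> R.

Definition dirac (E : nexp) : sdist :=
  fun s => if excluded_middle_informative (s = E) then 1 else 0.

Definition empty_dist : sdist := fun _ => 0.

Fixpoint sum_list (l : list R) : R :=
  match l with nil => 0 | x :: l' => x + sum_list l' end.

(* mu is a subdistribution: nonnegative with total mass |mu| <= 1
   (total mass = sup of sums over finite sets of distinct expressions). *)
Definition subdist (mu : sdist) : Prop :=
  (forall s, 0 <= mu s) /\
  (forall l : list nexp, NoDup l -> sum_list (map mu l) <= 1).

Inductive pstep : pexp -> sdist -> Prop :=
| ps_dist E : pstep (PDist E) (dirac E)
| ps_choice p (hp : 0 < p < 1) P Q mu nu :
    pstep P mu -> pstep Q nu ->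
    pstep (PChoice hp P Q) (fun s => p * mu s + (1 - p) * nu s)
with nstep : nexp -> Act -> sdist -> Prop :=
| ns_pre a P mu : pstep P mu -> nstep (NPre a P) a mu
| ns_rec X E a mu : nstep (nsubst E X (NRec X E)) a mu -> nstep (NRec X E) a mu
| ns_suml E F a mu : nstep E a mu -> nstep (NSum E F) a mu
| ns_sumr E F a mu : nstep E a mu -> nstep (NSum F E) a mu.

(* Combined transitions on subdistributions: least relation containing
   delta_E --a--> mu for E --a--> mu, closed under countable convex
   combinations sum_{i in I} p_i nu_i --a--> sum_{i in I} p_i mu_i
   with p_i >= 0 and sum_{i in I} p_i <= 1 (I a subset of nat). *)
Inductive ctrans (a : Act) : sdist -> sdist -> Prop :=
| ct_dirac E mu : nstep E a mu -> ctrans a (dirac E) mu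
| ct_comb (I : nat -> bool) (p : nat -> R) (nu mu : nat -> sdist) (nu' mu' : sdist) :
    (forall i, I i = true -> ctrans a (nu i) (mu i)) ->
    (forall i, 0 <= p i) ->
    (exists P, is_series (fun i => if I i then p i else 0) P /\ P <= 1) ->
    (forall s, is_series (fun i => if I i then p i * nu i s else 0) (nu' s)) ->
    (forall s, is_series (fun i => if I i then p i * mu i s else 0) (mu' s)) ->
    ctrans a nu' mu'.

Definition derivation (tau : Act) (mt mx : nat -> sdist) : Prop :=
  (forall i, subdist (mt i) /\ subdist (mx i)) /\
  (forall i, ctrans tau (mt i) (fun s => mt (S i) s + mx (S i) s)).

Definition wtrans (tau : Act) (mu nu : sdist) : Prop :=
  exists mt mx : nat -> sdist, derivation tau mt mx /\
    (forall s, mu s = mt 0%nat s + mx 0%nat s) /\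
    (forall s, is_series (fun i => mx i s) (nu s)).

Definition wtrans_act (tau a : Act) (mu nu : sdist) : Prop :=
  exists rho eta, wtrans tau mu rho /\ ctrans a rho eta /\ wtrans tau eta nu.

End Syntax.

(* Main.v *)
Require Import Defs.
From Stdlib Require Import Reals List ClassicalEpsilon Lra Lia Arith FunctionalExtensionality.
From Coquelicot Require Import Coquelicot.
Open Scope R_scope.


Lemma sum_n_ge0 (a : nat -> R) : (forall n, 0 <= a n) -> forall n, 0 <= sum_n a n.
Proof.
  intros Ha n; induction n.
  - rewrite sum_O; auto.
  - rewrite sum_Sn; unfold plus; simpl; specialize (Ha (S n)); lra.
Qed.

Lemma sum_n_mono (a b : nat -> R) : (forall n, a n <= b n) -> forall n, sum_n a n <= sum_n b n.
Proof.
  intros Ha n; induction n.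
  - rewrite !sum_O; auto.
  - rewrite !sum_Sn; unfold plus; simpl; specialize (Ha (S n)); lra.
Qed.

Lemma psum_le (a : nat -> R) l : (forall n, 0 <= a n) -> is_series a l -> forall n, sum_n a n <= l.
Proof.
  intros Ha H n. apply (is_lim_seq_incr_compare (sum_n a) l H).
  intro k. rewrite sum_Sn. unfold plus; simpl. specialize (Ha (S k)). lra.
Qed.

Lemma term_le_sum (a : nat -> R) : (forall n, 0 <= a n) -> forall n, a n <= sum_n a n.
Proof.
  intros Ha n; destruct n.
  - rewrite sum_O; lra.
  - rewrite sum_Sn; unfold plus; simpl. pose proof (sum_n_ge0 a Ha n). lra.
Qed.

Lemma term_le (a : nat -> R) l : (forall n, 0 <= a n) -> is_series a l -> forall n, a n <= l.
Proof.
  intros Ha H n. eapply Rle_trans. apply term_le_sum; auto. apply psum_le; auto.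
Qed.

Lemma ser_ge0 (a : nat -> R) l : (forall n, 0 <= a n) -> is_series a l -> 0 <= l.
Proof. intros Ha H. eapply Rle_trans. apply (Ha 0%nat). apply (term_le a l Ha H). Qed.

Lemma ser_le (a b : nat -> R) la lb : (forall n, a n <= b n) -> is_series a la -> is_series b lb -> la <= lb.
Proof.
  intros Hab Ha Hb.
  assert (H := is_lim_seq_le (sum_n a) (sum_n b) la lb (sum_n_mono a b Hab) Ha Hb).
  exact H.
Qed.

Lemma ser_uniq (a : nat -> R) l1 l2 : is_series a l1 -> is_series a l2 -> l1 = l2.
Proof. intros H1 H2. rewrite <- (is_series_unique a l1 H1). apply is_series_unique; auto. Qed.

Lemma bounded_ser (a : nat -> R) M : (forall n, 0 <= a n) -> (forall n, sum_n a n <= M) ->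
  exists l, is_series a l /\ l <= M.
Proof.
  intros Ha HM.
  assert (Hi : forall n, sum_n a n <= sum_n a (S n)).
  { intro n. rewrite sum_Sn. unfold plus; simpl. specialize (Ha (S n)). lra. }
  destruct (ex_lim_seq_incr _ Hi) as [L HL].
  assert (H1 := is_lim_seq_le (sum_n a) (fun _ => M) L M HM HL (is_lim_seq_const M)).
  assert (H2 := is_lim_seq_le (fun _ => sum_n a 0) (sum_n a) (sum_n a 0) L).
  destruct L as [r| |]; simpl in H1; try contradiction.
  - exists r. split; auto.
  - exfalso. assert (H3 : Rbar_le (sum_n a 0) m_infty).
    { apply H2. intro n. induction n. lra. eapply Rle_trans; eauto. apply is_lim_seq_const. auto. }
    exact H3.
Qed.

Lemma cmp_ser (a b : nat -> R) lb : (forall n, 0 <= a n <= b n) -> is_series b lb ->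
  exists la, is_series a la /\ la <= lb.
Proof.
  intros Hab Hb. apply bounded_ser. intro n; apply Hab.
  intro n. eapply Rle_trans. apply sum_n_mono. intro k; apply Hab.
  apply psum_le; auto. intro k; specialize (Hab k); lra.
Qed.

Lemma ser_zero_terms (a : nat -> R) : (forall n, 0 <= a n) -> is_series a 0 -> forall n, a n = 0.
Proof. intros Ha H n. pose proof (term_le a 0 Ha H n). specialize (Ha n). lra. Qed.

Lemma ser_finite (a : nat -> R) N : (forall k, (N < k)%nat -> a k = 0) -> is_series a (sum_n a N).
Proof.
  intros Hz. apply (proj2 (is_lim_seq_incr_n (sum_n a) N (sum_n a N))).
  eapply is_lim_seq_ext. 2: apply is_lim_seq_const.
  intro n. simpl. induction n.
  - reflexivity.
  - replace (S n + N)%nat with (S (n + N)) by lia. rewrite sum_Sn, <- IHn.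
    rewrite Hz by lia. unfold plus; simpl. symmetry. apply Rplus_0_r.
Qed.

Lemma ser_zero : is_series (fun _ : nat => 0) 0.
Proof.
  assert (H := ser_finite (fun _ : nat => 0) 0 (fun _ _ => eq_refl)).
  rewrite sum_O in H. exact H.
Qed.

Lemma ser_single (c : R) : is_series (fun k => if Nat.eqb k 0 then c else 0) c.
Proof.
  assert (H := ser_finite (fun k => if Nat.eqb k 0 then c else 0) 0).
  rewrite sum_O in H. simpl in H. apply H. intros k Hk. destruct k; [lia|reflexivity].
Qed.

Lemma ser_shift (x : nat -> R) l i : is_series x l ->
  is_series (fun d => if Nat.leb i d then x (d - i)%nat else 0) l.
Proof.
  revert x l; induction i; intros x l H.
  - eapply is_series_ext. 2: exact H. intro n. simpl. f_equal. lia.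
  - apply is_series_decr_1.
    apply IHi in H.
    match goal with |- is_series _ ?L => replace L with l end.
    2:{ simpl. unfold plus, opp; simpl. change (l = l + - 0). rewrite Ropp_0, Rplus_0_r. reflexivity. }
    eapply is_series_ext. 2: exact H. intro n. simpl. reflexivity.
Qed.

Lemma lim_sum (u : nat -> nat -> R) (l : nat -> R) J :
  (forall j, is_lim_seq (u j) (l j)) ->
  is_lim_seq (fun n => sum_n (fun j => u j n) J) (sum_n l J).
Proof.
  intros H; induction J.
  - rewrite sum_O. eapply is_lim_seq_ext. 2: apply H. intro n; rewrite sum_O; auto.
  - rewrite sum_Sn. eapply is_lim_seq_ext.
    2: apply (is_lim_seq_plus' _ _ _ _ IHJ (H (S J))).
    intro n. rewrite sum_Sn. reflexivity.
Qed.

Lemma tonelli (a : nat -> nat -> R) (r : nat -> R) (S : R) :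
  (forall i j, 0 <= a i j) -> (forall i, is_series (a i) (r i)) -> is_series r S ->
  (forall j, ex_series (fun i => a i j)) /\
  is_series (fun j => Series (fun i => a i j)) S.
Proof.
  intros Ha Hr HS.
  assert (Hr0 : forall i, 0 <= r i). { intro i. eapply ser_ge0. 2: apply Hr. auto. }
  assert (Hc : forall j, ex_series (fun i => a i j)).
  { intro j. destruct (cmp_ser (fun i => a i j) r S) as [la [Hla _]].
    - intro n; split; auto. eapply term_le. 2: apply Hr. auto.
    - auto.
    - exists la; auto. }
  split; auto.
  set (c := fun j => Series (fun i => a i j)).
  assert (Hcs : forall j, is_series (fun i => a i j) (c j)).
  { intro j. apply Series_correct. auto. }
  assert (Hc0 : forall j, 0 <= c j). { intro j. eapply ser_ge0. 2: apply Hcs. intro; apply Ha. }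
  destruct (bounded_ser c S) as [C [HC HCS]]; auto.
  { intro J.
    assert (HL := lim_sum (fun j n => sum_n (fun i => a i j) n) c J (fun j => Hcs j)).
    assert (HH := is_lim_seq_le (fun n => sum_n (fun j => sum_n (fun i => a i j) n) J) (fun _ => S) (sum_n c J) S).
    simpl in HH. apply HH; auto. 2: apply is_lim_seq_const.
    intro n. rewrite sum_n_switch. eapply Rle_trans.
    apply sum_n_mono. intro i. apply (psum_le (a i) (r i)); auto.
    apply psum_le; auto. }
  replace S with C; auto.
  apply Rle_antisym; auto.
  assert (HH := is_lim_seq_le (sum_n r) (fun _ => C) S C). simpl in HH. apply HH; auto.
  2: apply is_lim_seq_const.
  intro I.
  assert (HL := lim_sum (fun i n => sum_n (a i) n) r I (fun i => Hr i)).
  assert (HH2 := is_lim_seq_le (fun n => sum_n (fun i => sum_n (a i) n) I) (fun _ => C) (sum_n r I) C). simpl in HH2. apply HH2; auto.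
  2: apply is_lim_seq_const.
  intro n. rewrite <- sum_n_switch. eapply Rle_trans.
  apply sum_n_mono. intro j. apply (psum_le (fun i => a i j) (c j)); auto.
  apply psum_le; auto.
Qed.

Lemma tonelli' (a : nat -> nat -> R) (r : nat -> R) S (c : nat -> R) :
  (forall i j, 0 <= a i j) -> (forall i, is_series (a i) (r i)) -> is_series r S ->
  (forall j, is_series (fun i => a i j) (c j)) -> is_series c S.
Proof.
  intros Ha Hr HS Hc. destruct (tonelli a r S Ha Hr HS) as [_ H].
  eapply is_series_ext. 2: exact H. intro j. simpl. apply is_series_unique. auto.
Qed.

Lemma diag (x : nat -> nat -> R) (r : nat -> R) S :
  (forall i j, 0 <= x i j) -> (forall i, is_series (x i) (r i)) -> is_series r S ->
  is_series (fun d => sum_n (fun i => if Nat.leb i d then x i (d - i)%nat else 0) d) S.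
Proof.
  intros Hx Hr HS.
  apply (tonelli' (fun i d => if Nat.leb i d then x i (d - i)%nat else 0) r S); auto.
  - intros i j. destruct (Nat.leb i j); auto; lra.
  - intro i. apply ser_shift. auto.
  - intro j. apply ser_finite. intros k Hk.
    destruct (Nat.leb k j) eqn:E; auto. apply Nat.leb_le in E. lia.
Qed.

Lemma ser_plus (a b : nat -> R) la lb : is_series a la -> is_series b lb ->
  is_series (fun n => a n + b n) (la + lb).
Proof. intros Ha Hb. exact (is_series_plus a b la lb Ha Hb). Qed.

Lemma ser_scal (c : R) (a : nat -> R) l : is_series a l -> is_series (fun n => c * a n) (c * l).
Proof. intros H. exact (is_series_scal_l c a l H). Qed.

Lemma ser_scal_r (c : R) (a : nat -> R) l : is_series a l -> is_series (fun n => a n * c) (l * c).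
Proof. intros H. exact (is_series_scal_r c a l H). Qed.

Lemma ser_decr0 (a : nat -> R) l : a 0%nat = 0 -> is_series (fun k => a (S k)) l -> is_series a l.
Proof.
  intros H0 H. apply is_series_decr_1.
  match goal with |- is_series _ ?L => replace L with l end. exact H.
  unfold plus, opp; simpl. rewrite H0. change (l = l + - 0). rewrite Ropp_0, Rplus_0_r. reflexivity.
Qed.

Lemma ser_incr0 (a : nat -> R) l : a 0%nat = 0 -> is_series a l -> is_series (fun k => a (S k)) l.
Proof.
  intros H0 H. apply is_series_incr_1.
  match goal with |- is_series _ ?L => replace L with l end. exact H.
  unfold plus; simpl. rewrite H0. change (l = l + 0). rewrite Rplus_0_r. reflexivity.
Qed.

Lemma sum_n_shift (a : nat -> R) n : sum_n a (S n) = a 0%nat + sum_n (fun k => a (S k)) n.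
Proof.
  induction n.
  - rewrite sum_Sn, !sum_O. reflexivity.
  - rewrite sum_Sn, IHn, (sum_Sn (fun k => a (S k))). unfold plus; simpl.
    change (a 0%nat + sum_n (fun k => a (S k)) n + a (S (S n)) =
            a 0%nat + (sum_n (fun k => a (S k)) n + a (S (S n)))). ring.
Qed.

Lemma sum_list_map_plus {T} (f g : T -> R) l :
  sum_list (map (fun x => f x + g x) l) = sum_list (map f l) + sum_list (map g l).
Proof. induction l; simpl; [ring| rewrite IHl; ring]. Qed.

Lemma sum_list_map_scal {T} (c : R) (f : T -> R) l :
  sum_list (map (fun x => c * f x) l) = c * sum_list (map f l).
Proof. induction l; simpl; [ring| rewrite IHl; ring]. Qed.

Lemma sum_list_map_ext {T} (f g : T -> R) l : (forall x, In x l -> f x = g x) ->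
  sum_list (map f l) = sum_list (map g l).
Proof. induction l; simpl; intros H; auto. rewrite H, IHl; auto. Qed.

Lemma sum_list_map_le {T} (f g : T -> R) l : (forall x, In x l -> f x <= g x) ->
  sum_list (map f l) <= sum_list (map g l).
Proof. induction l; simpl; intros H. lra. pose proof (H a (or_introl eq_refl)). pose proof (IHl (fun x h => H x (or_intror h))). lra. Qed.

Lemma sum_list_map_ge0 {T} (f : T -> R) l : (forall x, In x l -> 0 <= f x) ->
  0 <= sum_list (map f l).
Proof. induction l; simpl; intros H. lra. pose proof (H a (or_introl eq_refl)). pose proof (IHl (fun x h => H x (or_intror h))). lra. Qed.

Lemma sum_list_app (l1 l2 : list R) : sum_list (l1 ++ l2) = sum_list l1 + sum_list l2.
Proof. induction l1; simpl; [ring| rewrite IHl1; ring]. Qed.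

Lemma sum_list_swap {T U} (F : T -> U -> R) (L : list T) (M : list U) :
  sum_list (map (fun x => sum_list (map (fun u => F x u) M)) L) =
  sum_list (map (fun u => sum_list (map (fun x => F x u) L)) M).
Proof.
  induction L; simpl.
  - induction M; simpl; auto. rewrite <- IHM. ring.
  - rewrite IHL. rewrite <- sum_list_map_plus. reflexivity.
Qed.

Lemma list_ser {T} (f : nat -> T -> R) (g : T -> R) l :
  (forall s, In s l -> is_series (fun i => f i s) (g s)) ->
  is_series (fun i => sum_list (map (f i) l)) (sum_list (map g l)).
Proof.
  induction l; simpl; intros H.
  - apply ser_zero.
  - apply ser_plus; auto.
Qed.

Section Dist.
Context {Act : Type}.
Notation sdist := (sdist Act).
Notation nexp := (nexp Act).

Lemma dirac_eq (E : nexp) : dirac E E = 1.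
Proof. unfold dirac. destruct (excluded_middle_informative (E = E)); congruence. Qed.
Lemma dirac_neq (E s : nexp) : s <> E -> dirac E s = 0.
Proof. unfold dirac. destruct (excluded_middle_informative (s = E)); congruence. Qed.
Lemma dirac_01 (E s : nexp) : 0 <= dirac E s <= 1.
Proof. unfold dirac. destruct (excluded_middle_informative (s = E)); lra. Qed.

Lemma sum_dirac_notin (E : nexp) l : ~ In E l -> sum_list (map (dirac E) l) = 0.
Proof.
  induction l; simpl; intros H; auto. rewrite dirac_neq, IHl; auto. ring.
Qed.

Lemma sum_dirac_nodup (E : nexp) l : NoDup l -> sum_list (map (dirac E) l) <= 1.
Proof.
  induction 1; simpl. lra.
  destruct (excluded_middle_informative (x = E)).
  - subst. rewrite sum_dirac_notin; auto. rewrite dirac_eq. lra.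
  - rewrite dirac_neq; auto. lra.
Qed.

Lemma sum_dirac_in (E : nexp) l : NoDup l -> In E l -> sum_list (map (dirac E) l) = 1.
Proof.
  induction 1; simpl; intros Hin. contradiction.
  destruct (excluded_middle_informative (x = E)).
  - subst. rewrite sum_dirac_notin; auto. rewrite dirac_eq. lra.
  - rewrite dirac_neq; auto. destruct Hin; [congruence|]. rewrite IHNoDup; auto. ring.
Qed.

Definition nonneg (m : sdist) := forall s, 0 <= m s.

Lemma subdist_le1 (m : sdist) : subdist m -> forall s, m s <= 1.
Proof.
  intros [H0 H1] s. specialize (H1 (s :: nil)). simpl in H1. 
  assert (NoDup (s :: nil)) by (constructor; [simpl; tauto| constructor]). specialize (H1 H). lra.
Qed.

Lemma subdist_le (f g : sdist) : (forall s, 0 <= f s <= g s) -> subdist g -> subdist f.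
Proof.
  intros H [H0 H1]. split. intro s; apply H.
  intros l Hl. eapply Rle_trans. 2: apply (H1 l Hl). apply sum_list_map_le. intros; apply H.
Qed.

Lemma subdist_empty : subdist (@empty_dist Act).
Proof.
  split. intro; unfold empty_dist; lra.
  intros l _. induction l; simpl; unfold empty_dist in *; lra.
Qed.

Lemma subdist_dirac (E : nexp) : subdist (dirac E).
Proof. split. intro; apply dirac_01. intros; apply sum_dirac_nodup; auto. Qed.

Lemma pstep_subdist (P : pexp Act) (m : sdist) : pstep P m -> subdist m.
Proof.
  induction 1. apply subdist_dirac.
  destruct IHpstep1 as [A1 B1], IHpstep2 as [A2 B2]. split.
  - intro s. specialize (A1 s); specialize (A2 s). nra.
  - intros l Hl. rewrite sum_list_map_plus, sum_list_map_scal,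
      (sum_list_map_scal (1 - p) nu). specialize (B1 l Hl); specialize (B2 l Hl). nra.
Qed.

Lemma nstep_subdist (E : nexp) (a : Act) (m : sdist) : nstep E a m -> subdist m.
Proof. induction 1; auto. eapply pstep_subdist; eauto. Qed.

Lemma ct_subdist (a : Act) (nu mu : sdist) : ctrans a nu mu -> subdist nu /\ subdist mu.
Proof.
  induction 1 as [E mu H | I p nu mu nu' mu' Hct IH Hp HP Hnu Hmu].
  - split. apply subdist_dirac. eapply nstep_subdist; eauto.
  - destruct HP as [P [HP HP1]].
    assert (G : forall (f : nat -> sdist) (m : sdist), (forall i, I i = true -> subdist (f i)) ->
              (forall s, is_series (fun i => if I i then p i * f i s else 0) (m s)) -> subdist m).
    { intros f m Hf Hm. split.
      - intro s. eapply ser_ge0. 2: apply Hm. intro i. simpl. destruct (I i) eqn:E; [|lra].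
        apply Rmult_le_pos; auto. apply (Hf i E).
      - intros l Hl.
        assert (Hs := list_ser (fun i s => if I i then p i * f i s else 0) m l (fun s _ => Hm s)).
        apply Rle_trans with P; auto.
        eapply ser_le. 2: exact Hs. 2: exact HP.
        intro i. simpl. destruct (I i) eqn:E.
        + rewrite sum_list_map_scal. destruct (Hf i E) as [_ Hf1]. specialize (Hf1 l Hl).
          specialize (Hp i). nra.
        + clear. induction l; simpl; lra. }
    split.
    + apply (G nu nu'); auto. intros i Hi; apply (IH i Hi).
    + apply (G mu mu'); auto. intros i Hi; apply (IH i Hi).
Qed.

End Dist.
Arguments ct_subdist {Act a nu mu}.
Arguments nstep_subdist {Act E a m}.
Arguments pstep_subdist {Act P m}.
Lemma ser_eq (a : nat -> R) (l l' : R) : is_series a l -> l = l' -> is_series a l'.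
Proof. intros H E; subst; auto. Qed.

Lemma mychoice {A B} (P : A -> B -> Prop) : (forall x, exists y, P x y) -> exists f, forall x, P x (f x).
Proof.
  intros H. exists (fun x => proj1_sig (constructive_indefinite_description _ (H x))).
  intro x. exact (proj2_sig (constructive_indefinite_description _ (H x))).
Qed.

Section LDsec.
Context {Act : Type}.
Notation sdist := (sdist Act).
Notation nexp := (nexp Act).

Lemma LD (a : Act) (nu mu : sdist) : ctrans a nu mu ->
  forall nus : nat -> sdist, (forall k s, 0 <= nus k s) ->
  (forall s, is_series (fun k => nus k s) (nu s)) ->
  exists mus : nat -> sdist, (forall k, ctrans a (nus k) (mus k)) /\
     (forall s, is_series (fun k => mus k s) (mu s)).
Proof.
  induction 1 as [E mu H | I p nu mu nu' mu' Hct IH Hp HP Hnu Hmu]; intros nus Hn Hs.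
  - set (c := fun k => nus k E).
    assert (Hc : is_series c 1). { rewrite <- (dirac_eq E). apply Hs. }
    assert (Hc1 : forall k, c k <= 1). { intro k. apply (term_le c); auto. intro; apply Hn. }
    assert (Hz : forall k s, s <> E -> nus k s = 0).
    { intros k s Hne. apply (ser_zero_terms (fun k => nus k s)). intro; apply Hn.
      rewrite <- (dirac_neq E s Hne). apply Hs. }
    exists (fun k s => c k * mu s). split.
    + intro k. apply ct_comb with (I := fun i => Nat.eqb i 0) (p := fun _ => c k)
        (nu := fun _ => dirac E) (mu := fun _ => mu).
      * intros; apply ct_dirac; auto.
      * intro; apply Hn.
      * exists (c k). split; auto. apply ser_single.
      * intro s. replace (nus k s) with (c k * dirac E s). apply ser_single.
        destruct (excluded_middle_informative (s = E)).
        -- subst. rewrite dirac_eq. unfold c; ring.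
        -- rewrite dirac_neq, Hz; auto. ring.
      * intro s. apply ser_single.
    + intro s. pose proof (ser_scal_r (mu s) c 1 Hc) as H0. rewrite Rmult_1_l in H0. exact H0.
  - assert (Hnn : forall i, I i = true -> forall s, 0 <= nu i s).
    { intros i Hi. apply (ct_subdist (Hct i Hi)). }
    assert (Hnu0 : forall s, 0 <= nu' s).
    { intro s. eapply ser_ge0. 2: apply Hnu. intro i. simpl. destruct (I i) eqn:Ei; [|lra].
      apply Rmult_le_pos; auto. }
    set (split := fun i k s => if Req_EM_T (nu' s) 0 then (if Nat.eqb k 0 then nu i s else 0)
                               else nu i s * nus k s / nu' s).
    assert (Hsnn : forall i, I i = true -> forall k s, 0 <= split i k s).
    { intros i Hi k s. unfold split. destruct (Req_EM_T (nu' s) 0).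
      - destruct (Nat.eqb k 0); auto; lra.
      - assert (0 < nu' s) by (specialize (Hnu0 s); lra).
        unfold Rdiv. apply Rmult_le_pos; [apply Rmult_le_pos; auto|]. apply Rlt_le, Rinv_0_lt_compat; auto. }
    assert (Hssum : forall i, I i = true -> forall s, is_series (fun k => split i k s) (nu i s)).
    { intros i Hi s. unfold split. destruct (Req_EM_T (nu' s) 0).
      - apply ser_single.
      - eapply ser_eq. eapply is_series_ext. 2: apply (ser_scal_r (nu i s / nu' s) _ _ (Hs s)).
        intro k. simpl. field; auto. simpl. field; auto. }
    assert (Hmus : forall i, exists ms : nat -> sdist, I i = true ->
              (forall k, ctrans a (split i k) (ms k)) /\ forall s, is_series (fun k => ms k s) (mu i s)).
    { intro i. destruct (I i) eqn:Ei.
      - destruct (IH i Ei (split i) (Hsnn i Ei) (Hssum i Ei)) as [ms Hms]. exists ms; auto.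
      - exists (fun _ => nu'). discriminate. }
    destruct (mychoice _ Hmus) as [MS HMS].
    assert (HMSnn : forall i, I i = true -> forall k s, 0 <= MS i k s).
    { intros i Hi k. apply (ct_subdist (proj1 (HMS i Hi) k)). }
    set (A := fun i k s => if I i then p i * MS i k s else 0).
    assert (T : forall s, (forall k, ex_series (fun i => A i k s)) /\
                 is_series (fun k => Series (fun i => A i k s)) (mu' s)).
    { intro s. apply (tonelli (fun i k => A i k s) (fun i => if I i then p i * mu i s else 0)).
      - intros i k. unfold A. destruct (I i) eqn:Ei; [|lra]. apply Rmult_le_pos; auto.
      - intro i. unfold A. destruct (I i) eqn:Ei.
        + apply ser_scal. apply (HMS i Ei).
        + apply ser_zero.
      - apply Hmu. }
    exists (fun k s => Series (fun i => A i k s)). split.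
    + intro k. apply ct_comb with (I:=I) (p:=p) (nu := fun i => split i k) (mu := fun i => MS i k).
      * intros i Hi. apply (HMS i Hi).
      * auto.
      * exact HP.
      * intro s. unfold split. destruct (Req_EM_T (nu' s) 0) as [E0|E0].
        -- assert (Hk0 : nus k s = 0).
           { apply (ser_zero_terms (fun k => nus k s)). intro; apply Hn. rewrite <- E0. apply Hs. }
           rewrite Hk0. destruct (Nat.eqb k 0).
           ++ eapply ser_eq. apply (Hnu s). auto.
           ++ eapply is_series_ext. 2: apply ser_zero. intro i; simpl. destruct (I i); ring.
        -- eapply ser_eq.
           eapply is_series_ext. 2: apply (ser_scal_r (nus k s / nu' s) _ _ (Hnu s)).
           intro i. simpl. destruct (I i); [field; auto| ring]. simpl; field; auto.
      * intro s. apply Series_correct. apply (proj1 (T s) k).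
    + intro s. apply (proj2 (T s)).
Qed.

End LDsec.
Arguments LD {Act a nu mu}.

Lemma ser_cons (a : nat -> R) (l : R) : is_series (fun k => a (S k)) l -> is_series a (a 0%nat + l).
Proof.
  intros H. apply is_series_decr_1.
  match goal with |- is_series _ ?L => replace L with l end. exact H.
  unfold plus, opp; simpl. change (@eq R l (a 0%nat + l + - a 0%nat)). ring.
Qed.

Lemma list_ser_nth {T} (f : T -> R) (L : list T) (d : T) :
  is_series (fun i => if Nat.ltb i (length L) then f (nth i L d) else 0) (sum_list (map f L)).
Proof.
  induction L; simpl.
  - eapply is_series_ext. 2: apply ser_zero. intro n. destruct n; reflexivity.
  - apply ser_cons. eapply is_series_ext. 2: exact IHL. intro n. simpl. reflexivity.
Qed.

Section Flat.
Context {Act : Type}.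
Notation sdist := (sdist Act).
Notation nexp := (nexp Act).

Definition atom := (R * nexp * sdist)%type.
Definition aq (x : atom) := fst (fst x).
Definition ae (x : atom) := snd (fst x).
Definition am (x : atom) := snd x.

Definition atoms_ok (a : Act) (L : list atom) :=
  forall x, In x L -> 0 <= aq x /\ nstep (ae x) a (am x).

Definition flat (a : Act) (nu mu : sdist) : Prop :=
  exists A : nat -> list atom,
    (forall n, atoms_ok a (A n)) /\
    (forall s, is_series (fun n => sum_list (map (fun x => aq x * dirac (ae x) s) (A n))) (nu s)) /\
    (forall s, is_series (fun n => sum_list (map (fun x => aq x * am x s) (A n))) (mu s)) /\
    (exists W, is_series (fun n => sum_list (map aq (A n))) W /\ W <= 1).

Lemma bound_list (L : list atom) (f : atom -> R) :
  (forall x, In x L -> 0 <= aq x /\ 0 <= f x <= 1) ->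
  0 <= sum_list (map (fun x => aq x * f x) L) <= sum_list (map aq L).
Proof.
  induction L; simpl; intros H. lra.
  destruct (H a (or_introl eq_refl)) as [H1 [H2 H3]].
  destruct (IHL (fun x h => H x (or_intror h))). split; nra.
Qed.

Definition d0 : atom := (0, NNil Act, @empty_dist Act).

Lemma fin_ct (a : Act) (L : list atom) w : atoms_ok a L -> sum_list (map aq L) = w -> 0 < w ->
  ctrans a (fun s => sum_list (map (fun x => aq x / w * dirac (ae x) s) L))
           (fun s => sum_list (map (fun x => aq x / w * am x s) L)).
Proof.
  intros HL Hw Hw0.
  assert (Hq : forall i, 0 <= aq (nth i L d0)).
  { intro i. destruct (Nat.lt_ge_cases i (length L)).
    - apply HL. apply nth_In; auto.
    - rewrite nth_overflow; auto. unfold aq, d0; simpl; lra. }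
  apply ct_comb with (I := fun i => Nat.ltb i (length L)) (p := fun i => aq (nth i L d0) / w)
    (nu := fun i => dirac (ae (nth i L d0))) (mu := fun i => am (nth i L d0)).
  - intros i Hi. apply ct_dirac. apply HL. apply nth_In. apply Nat.ltb_lt; auto.
  - intro i. unfold Rdiv. apply Rmult_le_pos; auto. apply Rlt_le, Rinv_0_lt_compat; auto.
  - exists 1. split; [|lra].
    eapply ser_eq. apply (list_ser_nth (fun x => aq x / w) L d0).
    unfold Rdiv. rewrite (sum_list_map_ext _ (fun x => / w * aq x)) by (intros; ring).
    rewrite sum_list_map_scal, Hw. apply Rinv_l. lra.
  - intro s. apply (list_ser_nth (fun x => aq x / w * dirac (ae x) s) L d0).
  - intro s. apply (list_ser_nth (fun x => aq x / w * am x s) L d0).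
Qed.

Lemma norm_term (L : list atom) (f : atom -> R) :
  (forall x, In x L -> 0 <= aq x /\ 0 <= f x <= 1) ->
  (if (if Rlt_dec 0 (sum_list (map aq L)) then true else false) then
     sum_list (map aq L) * sum_list (map (fun x => aq x / sum_list (map aq L) * f x) L) else 0)
  = sum_list (map (fun x => aq x * f x) L).
Proof.
  intros H. destruct (Rlt_dec 0 (sum_list (map aq L))).
  - set (S := sum_list (map aq L)) in *.
    rewrite (sum_list_map_ext (fun x => aq x / S * f x) (fun x => / S * (aq x * f x))).
    2:{ intros; unfold Rdiv; ring. }
    rewrite sum_list_map_scal. field. lra.
  - destruct (bound_list L f H). lra.
Qed.

Lemma flat_ct (a : Act) nu mu : flat a nu mu -> ctrans a nu mu.
Proof.
  intros [A [HA [Hn [Hm [W [HW HW1]]]]]].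
  set (w := fun n => sum_list (map aq (A n))).
  assert (Hw0 : forall n, 0 <= w n).
  { intro n. apply sum_list_map_ge0. intros x Hx. apply (HA n x Hx). }
  apply ct_comb with (I := fun n => if Rlt_dec 0 (w n) then true else false) (p := w)
    (nu := fun n s => sum_list (map (fun x => aq x / w n * dirac (ae x) s) (A n)))
    (mu := fun n s => sum_list (map (fun x => aq x / w n * am x s) (A n))).
  - intros n Hi. destruct (Rlt_dec 0 (w n)); [|discriminate]. apply fin_ct; auto.
  - auto.
  - exists W. split; auto. eapply is_series_ext. 2: exact HW. intro n. simpl.
    destruct (Rlt_dec 0 (w n)); auto. specialize (Hw0 n). unfold w in *. lra.
  - intro s. eapply is_series_ext. 2: apply Hn. intro n. simpl. unfold w.
    symmetry. apply norm_term. intros x Hx. split. apply (HA n x Hx). apply dirac_01.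
  - intro s. eapply is_series_ext. 2: apply Hm. intro n. simpl. unfold w.
    symmetry. apply norm_term. intros x Hx. split. apply (HA n x Hx).
    pose proof (nstep_subdist (proj2 (HA n x Hx))) as Hs. split. apply Hs. apply subdist_le1; auto.
Qed.

End Flat.

Section Comb.
Context {Act : Type}.
Notation sdist := (sdist Act).
Notation nexp := (nexp Act).
Notation atom := (@atom Act).

Definition scl (c : R) (x : atom) : atom := (c * aq x, ae x, am x).

Fixpoint bld (pc : nat -> list atom) (k : nat) : list atom :=
  match k with 0 => pc 0%nat | S k' => bld pc k' ++ pc (S k') end.

Lemma bld_sum pc k (F : atom -> R) :
  sum_list (map F (bld pc k)) = sum_n (fun i => sum_list (map F (pc i))) k.
Proof.
  induction k; simpl. rewrite sum_O. auto.
  rewrite map_app, sum_list_app, IHk, sum_Sn. reflexivity.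
Qed.

Lemma in_bld pc k x : In x (bld pc k) -> exists i, In x (pc i).
Proof.
  induction k; simpl; intros H. eauto.
  apply in_app_or in H. destruct H; eauto.
Qed.

Lemma scl_sum c L (F : atom -> R) : (forall x, F (scl c x) = c * F x) ->
  sum_list (map F (map (scl c) L)) = c * sum_list (map F L).
Proof.
  intros H. rewrite map_map. rewrite (sum_list_map_ext _ (fun x => c * F x)).
  apply sum_list_map_scal. intros; auto.
Qed.

Definition piece (I : nat -> bool) (p : nat -> R) (AA : nat -> nat -> list atom) (d i : nat) :=
  if I i then (if Nat.leb i d then map (scl (p i)) (AA i (d - i)%nat) else nil) else nil.

Definition combA I p AA (d : nat) := bld (piece I p AA d) d.

Lemma comb_series I p AA (F : atom -> R) r S :
  (forall c x, F (scl c x) = c * F x) ->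
  (forall i, I i = true -> forall j x, In x (AA i j) -> 0 <= F x) ->
  (forall i, I i = true -> is_series (fun j => sum_list (map F (AA i j))) (r i)) ->
  (forall i, 0 <= p i) ->
  is_series (fun i => if I i then p i * r i else 0) S ->
  is_series (fun d => sum_list (map F (combA I p AA d))) S.
Proof.
  intros HF Hnn Hr Hp HS.
  set (x := fun i j => if I i then p i * sum_list (map F (AA i j)) else 0).
  eapply is_series_ext.
  2: apply (diag x (fun i => if I i then p i * r i else 0) S).
  - intro d. unfold combA. rewrite bld_sum. apply sum_n_ext. intro i.
    unfold piece, x. destruct (I i); destruct (Nat.leb i d); simpl; auto.
    rewrite scl_sum; auto.
  - intros i j. unfold x. destruct (I i) eqn:Ei; [|lra]. apply Rmult_le_pos; auto.
    apply sum_list_map_ge0. intros; eapply Hnn; eauto.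
  - intro i. unfold x. destruct (I i) eqn:Ei. apply ser_scal; auto. apply ser_zero.
  - auto.
Qed.

Lemma combA_ok (a : Act) I p AA : (forall i, 0 <= p i) ->
  (forall i, I i = true -> forall j, atoms_ok a (AA i j)) -> forall d, atoms_ok a (combA I p AA d).
Proof.
  intros Hp HA d x Hx. unfold combA in Hx. apply in_bld in Hx. destruct Hx as [i Hi].
  unfold piece in Hi. destruct (I i) eqn:Ei; [|contradiction].
  destruct (Nat.leb i d); [|contradiction].
  apply in_map_iff in Hi. destruct Hi as [y [<- Hy]].
  destruct (HA i Ei _ y Hy) as [H1 H2]. unfold scl, aq, ae, am in *; simpl. split; auto.
  apply Rmult_le_pos; auto.
Qed.

Lemma ct_flat (a : Act) (nu mu : sdist) : ctrans a nu mu -> flat a nu mu.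
Proof.
  induction 1 as [E mu H | I p nu mu nu' mu' Hct IH Hp HP Hnu Hmu].
  - exists (fun n => if Nat.eqb n 0 then ((1, E, mu) : atom) :: nil else nil).
    split; [|split; [|split]].
    + intros n x Hx. destruct n; simpl in Hx; [destruct Hx as [<-|[]] | contradiction].
      unfold aq, ae, am; simpl. split; [lra|auto].
    + intro s. eapply ser_eq. eapply is_series_ext. 2: apply (ser_single (1 * dirac E s + 0)).
      intro n; destruct n; reflexivity. ring.
    + intro s. eapply ser_eq. eapply is_series_ext. 2: apply (ser_single (1 * mu s + 0)).
      intro n; destruct n; reflexivity. ring.
    + exists 1. split; [|lra]. eapply ser_eq. eapply is_series_ext. 2: apply (ser_single (1 + 0)).
      intro n; destruct n; reflexivity. simpl. apply Rplus_0_r.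
  - assert (Hch : forall i, exists A : nat -> list atom, I i = true ->
       (forall n, atoms_ok a (A n)) /\
       (forall s, is_series (fun n => sum_list (map (fun x => aq x * dirac (ae x) s) (A n))) (nu i s)) /\
       (forall s, is_series (fun n => sum_list (map (fun x => aq x * am x s) (A n))) (mu i s)) /\
       (exists W, is_series (fun n => sum_list (map aq (A n))) W /\ W <= 1)).
    { intro i. destruct (I i) eqn:Ei.
      - destruct (IH i Ei) as [A HA]. exists A; auto.
      - exists (fun _ => nil). discriminate. }
    destruct (mychoice _ Hch) as [AA HAA].
    exists (combA I p AA). split; [|split; [|split]].
    + apply combA_ok; auto. intros i Hi. apply (HAA i Hi).
    + intro s. apply (comb_series I p AA _ (fun i => nu i s)); auto.
      * intros c x. unfold scl, aq, ae; simpl. ring.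
      * intros i Hi j x Hx. destruct (HAA i Hi) as [Hok _]. destruct (Hok j x Hx).
        apply Rmult_le_pos; auto. apply dirac_01.
      * intros i Hi. apply (HAA i Hi).
    + intro s. apply (comb_series I p AA _ (fun i => mu i s)); auto.
      * intros c x. unfold scl, aq, am; simpl. ring.
      * intros i Hi j x Hx. destruct (HAA i Hi) as [Hok _]. destruct (Hok j x Hx) as [Hq0 Hst].
        apply Rmult_le_pos; auto. apply (nstep_subdist Hst).
      * intros i Hi. apply (HAA i Hi).
    + destruct HP as [P [HP HP1]].
      set (r := fun i => Series (fun j => sum_list (map aq (AA i j)))).
      assert (Hr : forall i, I i = true -> is_series (fun j => sum_list (map aq (AA i j))) (r i) /\ 0 <= r i <= 1).
      { intros i Hi. destruct (HAA i Hi) as [Hok [_ [_ [W [HW HW1]]]]].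
        unfold r. rewrite (is_series_unique _ _ HW). split; auto. split; auto.
        eapply ser_ge0. 2: exact HW. intro j. apply sum_list_map_ge0. intros x Hx. apply (Hok j x Hx). }
      destruct (cmp_ser (fun i => if I i then p i * r i else 0) (fun i => if I i then p i else 0) P)
        as [S [HS HS1]]; auto.
      { intro i. destruct (I i) eqn:Ei; [|lra]. destruct (Hr i Ei) as [_ Hr1].
        specialize (Hp i). split; nra. }
      exists S. split; [|lra].
      refine (comb_series I p AA aq r S _ _ _ Hp HS).
      * intros c x. reflexivity.
      * intros i Hi j x Hx. destruct (HAA i Hi) as [Hok _]. apply (Hok j x Hx).
      * intros i Hi. apply (Hr i Hi).
Qed.

Lemma G (L : list atom) (nu : sdist) : (forall x, In x L -> 0 <= aq x) -> subdist nu ->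
  (forall s, sum_list (map (fun x => aq x * dirac (ae x) s) L) <= nu s) -> sum_list (map aq L) <= 1.
Proof.
  intros Hq Hnu Hle.
  set (U := nodup (fun x y : nexp => excluded_middle_informative (x = y)) (map ae L)).
  assert (HU : NoDup U) by apply NoDup_nodup.
  rewrite (sum_list_map_ext aq (fun x => sum_list (map (fun u => aq x * dirac (ae x) u) U))).
  2:{ intros x Hx. rewrite sum_list_map_scal. rewrite sum_dirac_in; auto. ring.
      apply nodup_In. apply in_map; auto. }
  rewrite (sum_list_swap (fun x u => aq x * dirac (ae x) u)).
  eapply Rle_trans. apply (sum_list_map_le _ nu). intros; apply Hle.
  apply Hnu; auto.
Qed.

Lemma ct_sum (a : Act) (nus mus : nat -> sdist) (nu mu : sdist) :
  (forall k, ctrans a (nus k) (mus k)) -> subdist nu ->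
  (forall s, is_series (fun k => nus k s) (nu s)) ->
  (forall s, is_series (fun k => mus k s) (mu s)) -> ctrans a nu mu.
Proof.
  intros Hct Hsd Hn Hm. apply flat_ct.
  assert (Hch : forall k, exists A : nat -> list atom,
       (forall n, atoms_ok a (A n)) /\
       (forall s, is_series (fun n => sum_list (map (fun x => aq x * dirac (ae x) s) (A n))) (nus k s)) /\
       (forall s, is_series (fun n => sum_list (map (fun x => aq x * am x s) (A n))) (mus k s)) /\
       (exists W, is_series (fun n => sum_list (map aq (A n))) W /\ W <= 1)).
  { intro k. apply ct_flat. auto. }
  destruct (mychoice _ Hch) as [AA HAA].
  set (I := fun _ : nat => true). set (p := fun _ : nat => 1).
  assert (Hp : forall i, 0 <= p i) by (intro; unfold p; lra).
  assert (Hok : forall d, atoms_ok a (combA I p AA d)).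
  { apply combA_ok; auto. intros i _. apply (HAA i). }
  assert (Hnu : forall s, is_series (fun d => sum_list (map (fun x => aq x * dirac (ae x) s) (combA I p AA d))) (nu s)).
  { intro s. apply (comb_series I p AA _ (fun i => nus i s)); auto.
    - intros c x. unfold scl, aq, ae; simpl. ring.
    - intros i Hi j x Hx. destruct (HAA i) as [Hk _]. destruct (Hk j x Hx).
      apply Rmult_le_pos; auto. apply dirac_01.
    - intros i Hi. apply (HAA i).
    - eapply is_series_ext. 2: apply (Hn s). intro k. unfold I, p. simpl. ring. }
  exists (combA I p AA). split; [|split; [|split]]; auto.
  - intro s. apply (comb_series I p AA _ (fun i => mus i s)); auto.
    + intros c x. unfold scl, aq, am; simpl. ring.
    + intros i Hi j x Hx. destruct (HAA i) as [Hk _]. destruct (Hk j x Hx) as [Hq0 Hst].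
      apply Rmult_le_pos; auto. apply (nstep_subdist Hst).
    + intros i Hi. apply (HAA i).
    + eapply is_series_ext. 2: apply (Hm s). intro k. unfold I, p. simpl. ring.
  - apply bounded_ser.
    + intro n. apply sum_list_map_ge0. intros x Hx. apply (Hok n x Hx).
    + intro D. rewrite <- (bld_sum (combA I p AA) D aq).
      apply (G _ nu); auto.
      * intros x Hx. apply in_bld in Hx. destruct Hx as [i Hi]. apply (Hok i x Hi).
      * intro s. rewrite bld_sum. apply psum_le; auto.
        intro n. apply sum_list_map_ge0. intros x Hx. destruct (Hok n x Hx).
        apply Rmult_le_pos; auto. apply dirac_01.
Qed.

End Comb.

Section Deriv.
Context {Act : Type}.
Notation sdist := (sdist Act).
Notation nexp := (nexp Act).

Definition prp (A B x : sdist) : sdist :=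
  fun s => if Req_EM_T (A s + B s) 0 then 0 else x s * A s / (A s + B s).

Lemma prp_bound (A B x : sdist) s : 0 <= A s -> 0 <= B s -> 0 <= x s -> 0 <= prp A B x s <= x s.
Proof.
  intros HA HB Hx. unfold prp. destruct (Req_EM_T (A s + B s) 0). lra.
  assert (Hp : 0 < A s + B s) by lra.
  set (t := A s / (A s + B s)).
  assert (Ht : t * (A s + B s) = A s) by (unfold t; field; lra).
  assert (0 <= t) by (unfold t, Rdiv; apply Rmult_le_pos; [lra| apply Rlt_le, Rinv_0_lt_compat; lra]).
  assert (t <= 1) by nra.
  replace (x s * A s / (A s + B s)) with (x s * t) by (unfold t; field; lra). nra.
Qed.

Lemma prp_sum (A B : sdist) (xs : nat -> sdist) s : 0 <= A s -> 0 <= B s -> (forall k, 0 <= xs k s) ->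
  is_series (fun k => xs k s) (A s + B s) -> is_series (fun k => prp A B (xs k) s) (A s).
Proof.
  intros HA HB Hx H. unfold prp. destruct (Req_EM_T (A s + B s) 0) as [E|E].
  - eapply ser_eq. apply ser_zero. lra.
  - eapply ser_eq. eapply is_series_ext. 2: apply (ser_scal_r (A s / (A s + B s)) _ _ H).
    intro k. simpl. field; auto. simpl. field; auto.
Qed.

Lemma prp_split (A B : sdist) (xs : nat -> sdist) s k : 0 <= A s -> 0 <= B s -> (forall k, 0 <= xs k s) ->
  is_series (fun k => xs k s) (A s + B s) -> prp A B (xs k) s + prp B A (xs k) s = xs k s.
Proof.
  intros HA HB Hx H. unfold prp. destruct (Req_EM_T (A s + B s) 0) as [E|E].
  - destruct (Req_EM_T (B s + A s) 0); [|lra].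
    rewrite E in H. rewrite (ser_zero_terms (fun k => xs k s) Hx H k). ring.
  - destruct (Req_EM_T (B s + A s) 0); [lra|]. field. repeat split; intro; lra.
Qed.

Definition Msof (tau : Act) (et ex : nat -> sdist) (j : nat) (F : nat -> sdist) : nat -> sdist :=
  epsilon (inhabits (fun _ : nat => @empty_dist Act))
    (fun Ms => (forall k, ctrans tau (F k) (Ms k)) /\
               forall s, is_series (fun k => Ms k s) (et (S j) s + ex (S j) s)).

Fixpoint Gseq (tau : Act) (et ex : nat -> sdist) (etas : nat -> sdist) (j : nat) : nat -> sdist :=
  match j with
  | 0%nat => etas
  | S j' => Msof tau et ex j' (fun k => prp (et j') (ex j') (Gseq tau et ex etas j' k))
  end.

Lemma decomp_deriv (tau : Act) (et ex : nat -> sdist) (eta nu : sdist) (etas : nat -> sdist) :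
  derivation tau et ex -> (forall s, eta s = et 0%nat s + ex 0%nat s) ->
  (forall s, is_series (fun j => ex j s) (nu s)) ->
  (forall k, subdist (etas k)) -> (forall s, is_series (fun k => etas k s) (eta s)) ->
  exists Ft Fx : nat -> nat -> sdist,
    (forall j k s, 0 <= Ft j k s /\ 0 <= Fx j k s) /\
    (forall k s, etas k s = Ft 0%nat k s + Fx 0%nat k s) /\
    (forall j k, ctrans tau (Ft j k) (fun s => Ft (S j) k s + Fx (S j) k s)) /\
    (forall s, (forall k, ex_series (fun j => Fx j k s)) /\
               is_series (fun k => Series (fun j => Fx j k s)) (nu s)).
Proof.
  intros [Hsd Hstep] H0 Hser Hes Hess.
  set (G := Gseq tau et ex etas).
  assert (Hnn : forall j s, 0 <= et j s /\ 0 <= ex j s).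
  { intros j s. split; apply (Hsd j). }
  assert (Inv : forall j, (forall k, subdist (G j k)) /\
                  (forall s, is_series (fun k => G j k s) (et j s + ex j s))).
  { induction j.
    - split; auto. intro s. rewrite <- H0. apply Hess.
    - destruct IHj as [IH1 IH2].
      set (F := fun k => prp (et j) (ex j) (G j k)).
      assert (HF0 : forall k s, 0 <= F k s).
      { intros k s. apply prp_bound; try apply Hnn. apply (IH1 k). }
      assert (HFs : forall s, is_series (fun k => F k s) (et j s)).
      { intro s. apply prp_sum; try apply Hnn. intro; apply (IH1 k). auto. }
      destruct (LD (Hstep j) F HF0 HFs) as [Ms HMs].
      assert (Hspec := epsilon_spec (inhabits (fun _ : nat => @empty_dist Act))
        (fun Ms => (forall k, ctrans tau (F k) (Ms k)) /\
               forall s, is_series (fun k => Ms k s) (et (S j) s + ex (S j) s))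
        (ex_intro _ Ms HMs)).
      change (G (S j)) with (Msof tau et ex j F).
      destruct Hspec as [Hs1 Hs2]. split.
      + intro k. apply (ct_subdist (Hs1 k)).
      + exact Hs2. }
  assert (HGnn : forall j k s, 0 <= G j k s). { intros j k s. apply (proj1 (Inv j) k). }
  exists (fun j k => prp (et j) (ex j) (G j k)), (fun j k => prp (ex j) (et j) (G j k)).
  split; [|split; [|split]].
  - intros j k s. split; apply prp_bound; try apply Hnn; auto.
  - intros k s. symmetry. apply (prp_split (et 0%nat) (ex 0%nat) (G 0%nat)); try apply Hnn; auto.
    intro; auto. apply (proj2 (Inv 0%nat)).
  - intros j k.
    set (F := fun k => prp (et j) (ex j) (G j k)).
    assert (HF0 : forall k s, 0 <= F k s).
    { intros k' s. apply prp_bound; try apply Hnn. auto. }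
    assert (HFs : forall s, is_series (fun k => F k s) (et j s)).
    { intro s. apply prp_sum; try apply Hnn. intro; auto. apply (proj2 (Inv j)). }
    destruct (LD (Hstep j) F HF0 HFs) as [Ms HMs].
    assert (Hspec := epsilon_spec (inhabits (fun _ : nat => @empty_dist Act))
        (fun Ms => (forall k, ctrans tau (F k) (Ms k)) /\
               forall s, is_series (fun k => Ms k s) (et (S j) s + ex (S j) s))
        (ex_intro _ Ms HMs)).
    destruct Hspec as [Hs1 _].
    specialize (Hs1 k).
    change (ctrans tau (F k) (fun s => prp (et (S j)) (ex (S j)) (G (S j) k) s +
                                        prp (ex (S j)) (et (S j)) (G (S j) k) s)).
    replace (fun s => prp (et (S j)) (ex (S j)) (G (S j) k) s +
                      prp (ex (S j)) (et (S j)) (G (S j) k) s) with (G (S j) k).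
    exact Hs1.
    apply functional_extensionality. intro s. symmetry.
    apply (prp_split (et (S j)) (ex (S j)) (G (S j))); try apply Hnn; auto.
    intro; auto. apply (proj2 (Inv (S j))).
  - intro s. apply (tonelli (fun j k => prp (ex j) (et j) (G j k) s) (fun j => ex j s) (nu s)).
    + intros j k. apply prp_bound; try apply Hnn; auto.
    + intro j. apply prp_sum; try apply Hnn; auto. intro; auto.
      eapply ser_eq. apply (proj2 (Inv j)). ring.
    + auto.
Qed.

End Deriv.

Ltac rring := match goal with |- ?x = ?y => change (@eq R x y) end; ring.

Section Main.
Context {Act : Type}.
Notation sdist := (sdist Act).
Notation nexp := (nexp Act).

Lemma ct_zero (a : Act) (nu mu : sdist) : (forall s, nu s = 0) -> (forall s, mu s = 0) -> ctrans a nu mu.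
Proof.
  intros Hn Hm.
  apply ct_comb with (I := fun _ => false) (p := fun _ => 0) (nu := fun _ => nu) (mu := fun _ => mu).
  - discriminate.
  - intro; lra.
  - exists 0. split; [apply ser_zero | lra].
  - intro s. rewrite Hn. apply ser_zero.
  - intro s. rewrite Hm. apply ser_zero.
Qed.

Lemma subdist_ext (f g : sdist) : (forall s, f s = g s) -> subdist g -> subdist f.
Proof. intros H Hg. apply (subdist_le f g); auto. intro s. rewrite H. split; [apply Hg|lra]. Qed.

Lemma sum_if_plus (c : nat -> bool) (a b : nat -> R) n :
  sum_n (fun k => if c k then a k + b k else 0) n =
  sum_n (fun k => if c k then a k else 0) n + sum_n (fun k => if c k then b k else 0) n.
Proof.
  induction n.
  - rewrite !sum_O. destruct (c 0%nat); rring.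
  - rewrite !sum_Sn, IHn. unfold plus; simpl. destruct (c (S n)); rring.
Qed.

Lemma sum_diag_S (f : nat -> nat -> R) n :
  sum_n (fun k => if Nat.leb k (S n) then f k (S n - k)%nat else 0) (S n) =
  sum_n (fun k => if Nat.leb k n then f k (S (n - k)) else 0) n + f (S n) 0%nat.
Proof.
  rewrite sum_Sn. unfold plus; cbn -[Nat.sub Nat.leb sum_n]. f_equal.
  - apply sum_n_ext_loc. intros k Hk.
    destruct (Nat.leb k (S n)) eqn:E1; [|apply Nat.leb_gt in E1; lia].
    destruct (Nat.leb k n) eqn:E2; [|apply Nat.leb_gt in E2; lia].
    f_equal. lia.
  - rewrite Nat.leb_refl, Nat.sub_diag. reflexivity.
Qed.

Lemma a_to_c (tau : Act) (mu nu : sdist) : subdist mu ->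
  wtrans_act tau tau mu nu ->
  exists mt mx : nat -> sdist, derivation tau mt mx /\
       (forall s, mu s = mt 0%nat s + mx 0%nat s) /\
       (forall s, is_series (fun i => mx i s) (nu s)) /\
       (forall s, mx 0%nat s = empty_dist s).
Proof.
  intros Hmu [rho [eta [[mt [mx [[Hsd Hstep] [H0 Hser]]]] [Hct [et [ex [Hder2 [H02 Hser2]]]]]]]].
  destruct (LD Hct mx) as [etas [Hect Hess]].
  { intros k s. apply (Hsd k). }
  { auto. }
  assert (Hes : forall k, subdist (etas k)). { intro k. apply (ct_subdist (Hect k)). }
  destruct (decomp_deriv tau et ex eta nu etas Hder2 H02 Hser2 Hes Hess) as [Ft [Fx [HF0 [HFi [HFst HFser]]]]].
  set (tt := fun k j => match j with 0%nat => mx k | S j' => Ft j' k end).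
  set (tx := fun k j => match j with 0%nat => @empty_dist Act | S j' => Fx j' k end).
  assert (T1 : forall k j, ctrans tau (tt k j) (fun s => tt k (S j) s + tx k (S j) s)).
  { intros k j. destruct j.
    - simpl. replace (fun s => Ft 0%nat k s + Fx 0%nat k s) with (etas k). apply Hect.
      apply functional_extensionality; auto.
    - simpl. apply HFst. }
  assert (T2 : forall k j s, 0 <= tt k j s /\ 0 <= tx k j s).
  { intros k j s. destruct j; simpl. split. apply (Hsd k). unfold empty_dist; lra. apply HF0. }
  set (nt := fun n s => mt n s + sum_n (fun k => if Nat.leb k n then tt k (n - k)%nat s else 0) n).
  set (nx := fun n s => sum_n (fun k => if Nat.leb k n then tx k (n - k)%nat s else 0) n).
  assert (Hnt0 : forall n s, 0 <= nt n s).
  { intros n s. unfold nt. pose proof (proj1 (Hsd n) : subdist (mt n)) as [Hm _].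
    assert (0 <= sum_n (fun k => if Nat.leb k n then tt k (n - k)%nat s else 0) n).
    { apply sum_n_ge0. intro k. destruct (Nat.leb k n); [apply T2|lra]. }
    specialize (Hm s). lra. }
  assert (Hnx0 : forall n s, 0 <= nx n s).
  { intros n s. unfold nx. apply sum_n_ge0. intro k. destruct (Nat.leb k n); [apply T2|lra]. }
  assert (Step : forall n, subdist (nt n) -> ctrans tau (nt n) (fun s => nt (S n) s + nx (S n) s)).
  { intros n Hsn.
    apply (@ct_sum Act tau
      (fun k => match k with 0%nat => mt n | S k' => if Nat.leb k' n then tt k' (n - k')%nat else @empty_dist Act end)
      (fun k => match k with 0%nat => (fun s => mt (S n) s + mx (S n) s)
               | S k' => if Nat.leb k' n then (fun s => tt k' (S (n - k')) s + tx k' (S (n - k')) s)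
                         else @empty_dist Act end)); auto.
    - intro k. destruct k. apply Hstep. destruct (Nat.leb k n). apply T1.
      apply ct_zero; reflexivity.
    - intro s. eapply ser_eq. apply (ser_finite _ (S n)).
      { intros k Hk. destruct k; [lia|]. destruct (Nat.leb k n) eqn:E; [apply Nat.leb_le in E; lia|reflexivity]. }
      rewrite sum_n_shift. unfold nt. f_equal. apply sum_n_ext. intro k.
      destruct (Nat.leb k n); reflexivity.
    - intro s. eapply ser_eq. apply (ser_finite _ (S n)).
      { intros k Hk. destruct k; [lia|]. destruct (Nat.leb k n) eqn:E; [apply Nat.leb_le in E; lia|reflexivity]. }
      rewrite sum_n_shift. unfold nt, nx.
      rewrite (sum_diag_S (fun k j => tt k j s)), (sum_diag_S (fun k j => tx k j s)).
      simpl.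
      rewrite (sum_n_ext _ (fun k => if Nat.leb k n then tt k (S (n - k)) s + tx k (S (n - k)) s else 0)).
      2:{ intro k. destruct (Nat.leb k n); reflexivity. }
      rewrite sum_if_plus. unfold tt, tx. simpl. unfold empty_dist. rring. }
  assert (Hsub : forall n, subdist (nt n) /\ subdist (nx n)).
  { induction n.
    - split.
      + apply (subdist_ext _ mu); auto. intro s. unfold nt. rewrite sum_O. simpl. rewrite H0. reflexivity.
      + apply (subdist_ext _ (@empty_dist Act)). intro s. unfold nx. rewrite sum_O. reflexivity.
        apply subdist_empty.
    - destruct IHn as [IH1 _]. pose proof (proj2 (ct_subdist (Step n IH1))) as HT. split.
      + apply (subdist_le _ _ ) with (2 := HT). intro s. split; auto. specialize (Hnx0 (S n) s). lra.
      + apply (subdist_le _ _ ) with (2 := HT). intro s. split; auto. specialize (Hnt0 (S n) s). lra. }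
  exists nt, nx. split; [split|split; [|split]].
  - auto.
  - intro i. apply Step. apply Hsub.
  - intro s. unfold nt, nx. rewrite !sum_O. simpl. rewrite H0. unfold empty_dist. ring.
  - intro s. destruct (HFser s) as [Hex HS].
    apply (diag (fun k j => tx k j s) (fun k => Series (fun j => Fx j k s)) (nu s)); auto.
    + intros; apply T2.
    + intro k. apply ser_decr0. reflexivity. simpl. apply Series_correct. apply Hex.
  - intro s. unfold nx. rewrite sum_O. reflexivity.
Qed.

End Main.

Theorem mainTheorem10 (Act : Type) (tau : Act) (mu nu : sdist Act) :
  subdist mu -> subdist nu ->
  (wtrans_act tau tau mu nu <->
     exists rho, ctrans tau mu rho /\ wtrans tau rho nu) /\
  ((exists rho, ctrans tau mu rho /\ wtrans tau rho nu) <->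
     exists mt mx : nat -> sdist Act, derivation tau mt mx /\
       (forall s, mu s = mt 0%nat s + mx 0%nat s) /\
       (forall s, is_series (fun i => mx i s) (nu s)) /\
       (forall s, mx 0%nat s = empty_dist s)).
Proof.
  intros Hmu Hnu.
  assert (BC : (exists rho, ctrans tau mu rho /\ wtrans tau rho nu) <->
     exists mt mx : nat -> sdist Act, derivation tau mt mx /\
       (forall s, mu s = mt 0%nat s + mx 0%nat s) /\
       (forall s, is_series (fun i => mx i s) (nu s)) /\
       (forall s, mx 0%nat s = empty_dist s)).
  { split.
    - intros [rho [Hct [mt [mx [[Hsd Hstep] [H0 Hser]]]]]].
      exists (fun i => match i with 0%nat => mu | S j => mt j end),
             (fun i => match i with 0%nat => @empty_dist Act | S j => mx j end).
      split; [split|split; [|split]].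
      + intro i; destruct i; [split; auto; apply subdist_empty | apply Hsd].
      + intro i; destruct i.
        * replace (fun s => mt 0%nat s + mx 0%nat s) with rho; auto.
          apply functional_extensionality; auto.
        * apply Hstep.
      + intro s. unfold empty_dist. ring.
      + intro s. apply ser_decr0. reflexivity. apply Hser.
      + intro s; reflexivity.
    - intros [mt [mx [[Hsd Hstep] [H0 [Hser Hz]]]]].
      exists (fun s => mt 1%nat s + mx 1%nat s). split.
      + replace mu with (mt 0%nat). apply Hstep.
        apply functional_extensionality. intro s. rewrite H0, Hz. unfold empty_dist. ring.
      + exists (fun i => mt (S i)), (fun i => mx (S i)). split; [split|split].
        * intro; apply Hsd.
        * intro; apply Hstep.
        * intro; reflexivity.
        * intro s. apply (ser_incr0 (fun i => mx i s)). rewrite Hz; reflexivity. apply Hser. }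
  split; [split|exact BC].
  - intro Ha. apply BC. apply a_to_c; auto.
  - intros [rho [Hct Hw]]. exists mu, rho. split; [|split; auto].
    exists (fun _ => @empty_dist Act), (fun i s => if Nat.eqb i 0 then mu s else 0).
    split; [split|split].
    + intro i. split. apply subdist_empty. destruct i; simpl.
      * apply (subdist_ext _ mu); auto.
      * apply (subdist_ext _ (@empty_dist Act)). reflexivity. apply subdist_empty.
    + intro i. apply ct_zero; intro s; simpl; unfold empty_dist; ring.
    + intro s. simpl. unfold empty_dist. ring.
    + intro s. apply ser_single.
Qed.
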